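(* Let $I$ be a small directed category and let $p_I:A_I\to I$ be the functor constructed from $I$ as described in the context. Then $p_I$ is cofinal, i.e. for every object $i$ of $I$ the over category $(p_I)_{/i}$ is nonempty and connected.
   Context: Posets are categories with a unique morphism $u\to v$ iff $u\geq v$. A subset $R$ of a poset $T$ is a section if $x\in R$, $y<x$ imply $y\in R$. For a category $\mathcal{R}$, $\mathcal{R}^{\lhd}$ is $\mathcal{R}$ with a new initial object $\infty$ adjoined. A category $I$ is directed if nonempty, any two objects admit an object mapping to both, and any parallel pair $f,g:s\to t$ is equalized by some $h:u\to s$. The over category $(p)_{/i}$ has objects pairs $(a, p(a)\to i)$. Construction: set $A_I^{-1}=\emptyset$ and $p^{-1}_I$ the empty functor. Given a poset $A_I^n$ and a functor $p_I^n:A_I^n\to I$, let $B_I^{n+1}$ be the set of pairs $(R,p)$ with $R$ a finite section of $A_I^n$ and $p:R^{\lhd}\to I$ a functor with $p|_R=p_I^n|_R$. Set $A_I^{n+1}=A_I^n\sqcup B_I^{n+1}$, with the order of $A_I^n$ extended by $c<(R,p)$ iff $c\in R$ (for $c\in A_I^n$), and $p_I^{n+1}$ extending $p_I^n$ with $p_I^{n+1}(R,p)=p(\infty)$ (on morphisms $(R,p)\to c$ it is $p(\infty\to c)$). Let $A_I=\bigcup_n A_I^n$ and $p_I:A_I\to I$ the union of the $p_I^n$. *)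

(* Defs.v *)
From Stdlib Require Import List Relations.

Record Cat : Type := {
  Ob : Type;
  Hom : Ob -> Ob -> Type;
  cid : forall a, Hom a a;
  ccomp : forall a b c, Hom b c -> Hom a b -> Hom a c;
  ccomp_id_l : forall a b (f : Hom a b), ccomp a b b (cid b) f = f;
  ccomp_id_r : forall a b (f : Hom a b), ccomp a a b f (cid a) = f;
  ccomp_assoc : forall a b c d (f : Hom c d) (g : Hom b c) (h : Hom a b),
      ccomp a c d f (ccomp a b c g h) = ccomp a b d (ccomp b c d f g) h
}.
Arguments Hom {_} _ _.
Arguments cid {_} _.
Arguments ccomp {_ _ _ _} _ _.

Definition directed (I : Cat) : Prop :=
  inhabited (Ob I) /\
  (forall a b : Ob I, exists c (f : Hom c a) (g : Hom c b), True) /\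
  (forall (s t : Ob I) (f g : Hom s t),
      exists (u : Ob I) (h : Hom u s), ccomp f h = ccomp g h).

Definition castHom {I : Cat} {a b b' : Ob I} (e : b = b') (f : Hom a b) : Hom a b' :=
  eq_rect b (fun x => Hom a x) f b' e.

Section Construction.
Variable I : Cat.

(** A stage: a poset [car] with order [ge x y] ("x >= y", i.e. a morphism x -> y)
    and a functor [pob]/[pmo] to I. *)
Record Stage : Type := {
  car : Type;
  ge : car -> car -> Prop;
  pob : car -> Ob I;
  pmo : forall x y, ge x y -> Hom (pob x) (pob y)
}.

(** The new elements B^{n+1} built over a stage S = (A^n, p^n):
    pairs (R, p) with R a finite section of A^n and p : R^◁ -> I a functor
    extending p^n|_R.  Such a functor is exactly the data of the object
    p(∞) = [bv], the morphisms p(∞ -> c) = [bf c] for c in R, and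
    functoriality on the composites ∞ -> c -> d ([bcone]); on R it is p^n. *)
Record Bel (S : Stage) : Type := {
  bR : car S -> Prop;
  bfin : exists l : list (car S), forall x, bR x -> In x l;
  bsec : forall x y, bR x -> ge S x y -> bR y;
  bv : Ob I;
  bf : forall c, bR c -> Hom bv (pob S c);
  bcone : forall c d (hc : bR c) (hd : bR d) (h : ge S c d),
      ccomp (pmo S c d h) (bf c hc) = bf d hd
}.
Arguments bR {S} _ _.
Arguments bv {S} _.
Arguments bf {S} _ _ _.

Definition next_car (S : Stage) : Type := (car S + Bel S)%type.

Definition next_ge (S : Stage) (x y : next_car S) : Prop :=
  match x, y with
  | inl a, inl b => ge S a b
  | inr b, inr b' => b = b'
  | inr b, inl c => bR b c
  | inl _, inr _ => False
  end.

Definition next_pob (S : Stage) (x : next_car S) : Ob I :=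
  match x with inl a => pob S a | inr b => bv b end.

Definition next_pmo (S : Stage) :
  forall x y, next_ge S x y -> Hom (next_pob S x) (next_pob S y) :=
  fun x y =>
  match x as x0, y as y0
        return next_ge S x0 y0 -> Hom (next_pob S x0) (next_pob S y0) with
  | inl a, inl b => fun h => pmo S a b h
  | inr b, inr b' => fun h => eq_rect b (fun z => Hom (bv b) (bv z)) (cid (bv b)) b' h
  | inr b, inl c => fun h => bf b c h
  | inl a, inr b => fun h => False_rect _ h
  end.

Definition next (S : Stage) : Stage :=
  {| car := next_car S; ge := next_ge S; pob := next_pob S; pmo := next_pmo S |}.

Definition empty_stage : Stage :=
  {| car := Empty_set; ge := fun _ _ => False; pob := fun x => match x with end;
     pmo := fun x => match x with end |}.

(** [stage n] is A_I^{n-1} (with p_I^{n-1}); [stage 0] = A_I^{-1} = ∅. *)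
Fixpoint stage (n : nat) : Stage :=
  match n with
  | O => empty_stage
  | S m => next (stage m)
  end.

(** Elements of A_I = ⋃_n A_I^n: every element is born in exactly one B_I^n;
    [existT n b] is the element b of B_I^n = Bel (stage n). *)
Definition AI : Type := { n : nat & Bel (stage n) }.

Fixpoint emb (n : nat) : car (stage n) -> AI :=
  match n as n0 return car (stage n0) -> AI with
  | O => fun x => match x with end
  | S m => fun x => match x with
                    | inl a => emb m a
                    | inr b => existT _ m b
                    end
  end.

Definition pI (x : AI) : Ob I := bv (projT2 x).

Fixpoint pI_emb (n : nat) : forall c : car (stage n), pI (emb n c) = pob (stage n) c :=
  match n as n0 return forall c : car (stage n0), pI (emb n0 c) = pob (stage n0) c with
  | O => fun c => match c with end
  | S m => fun c => match c as c0 return pI (emb (S m) c0) = pob (stage (S m)) c0 with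
                    | inl a => pI_emb m a
                    | inr b => eq_refl
                    end
  end.

Inductive AMor : AI -> AI -> Type :=
| AMor_refl (x : AI) : AMor x x
| AMor_step (n : nat) (b : Bel (stage n)) (c : car (stage n)) (hc : bR b c) :
    AMor (existT _ n b) (emb n c).

Definition pI_mor (x y : AI) (h : AMor x y) : Hom (pI x) (pI y) :=
  match h in AMor x0 y0 return Hom (pI x0) (pI y0) with
  | AMor_refl x => cid (pI x)
  | AMor_step n b c hc => castHom (eq_sym (pI_emb n c)) (bf b c hc)
  end.

Definition over_ob (i : Ob I) : Type := { a : AI & Hom (pI a) i }.

Definition over_mor (i : Ob I) (x y : over_ob i) : Prop :=
  exists h : AMor (projT1 x) (projT1 y), ccomp (projT2 y) (pI_mor _ _ h) = projT2 x.

Definition nonempty_connected_over (i : Ob I) : Prop :=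
  inhabited (over_ob i) /\
  (forall x y : over_ob i, clos_refl_sym_trans (over_ob i) (over_mor i) x y).

Definition pI_cofinal : Prop := forall i : Ob I, nonempty_connected_over i.

End Construction.

(* Main.v *)
Require Import Defs.
From Stdlib Require Import List Relations ProofIrrelevance Classical ClassicalEpsilon.

Section Proofs.
Variable I : Cat.

Lemma ge_refl : forall n x, ge I (stage I n) x x.
Proof. induction n; intros x; [destruct x|]. destruct x; simpl; [apply IHn|reflexivity]. Qed.

Lemma ge_trans : forall n x y z, ge I (stage I n) x y -> ge I (stage I n) y z -> ge I (stage I n) x z.
Proof.
  induction n; [intros []|].
  intros [x|x] [y|y] [z|z]; simpl; try tauto; intros.
  - eapply IHn; eauto.
  - eapply bsec; eauto.
  - subst; auto.
  - congruence.
Qed.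

Lemma pmo_refl : forall n x h, pmo I (stage I n) x x h = cid _.
Proof.
  induction n; [intros []|]. intros [x|x] h; simpl.
  - apply IHn.
  - rewrite (proof_irrelevance _ h eq_refl). reflexivity.
Qed.

Lemma pmo_comp : forall n x y z h1 h2 h3,
  pmo I (stage I n) x z h3 = ccomp (pmo I (stage I n) y z h2) (pmo I (stage I n) x y h1).
Proof.
  induction n; [intros []|].
  intros [x|x] [y|y] [z|z]; simpl; intros h1 h2 h3; try tauto.
  - apply IHn.
  - symmetry. apply bcone.
  - subst y. simpl. rewrite ccomp_id_r. f_equal. apply proof_irrelevance.
  - subst y. subst z. rewrite (proof_irrelevance _ h3 eq_refl). simpl.
    rewrite ccomp_id_l. reflexivity.
Qed.

Lemma down_fin : forall n (a : car I (stage I n)),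
  exists l, forall x, ge I (stage I n) a x -> In x l.
Proof.
  induction n; [intros []|]. intros [a|b].
  - destruct (IHn a) as [l Hl]. exists (map inl l).
    intros [x|x]; simpl; [|tauto]. intros h. apply in_map. auto.
  - destruct (bfin _ _ b) as [l Hl]. exists (inr b :: map inl l).
    intros [x|x]; simpl; intros h.
    + right. apply in_map. auto.
    + left. congruence.
Qed.

Definition castHom' {a b b' : Ob I} (e : b = b') (f : Hom a b) : Hom a b' := castHom e f.

Lemma castHom_comp : forall (a b c c' : Ob I) (e : c = c') (x : Hom b c) (y : Hom a b),
  castHom e (ccomp x y) = ccomp (castHom e x) y.
Proof. intros. destruct e. reflexivity. Qed.

Lemma castHom_trans : forall (a b c d : Ob I) (e1 : b = c) (e2 : c = d) (h : Hom a b),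
  castHom e2 (castHom e1 h) = castHom (eq_trans e1 e2) h.
Proof. intros. destruct e1, e2. reflexivity. Qed.

Lemma castHom_loop : forall (a b : Ob I) (e : b = b) (h : Hom a b), castHom e h = h.
Proof. intros. rewrite (proof_irrelevance _ e eq_refl). reflexivity. Qed.

Section Build.
Variable m : nat.
Local Notation S := (stage I m).
Variables a t : car I S.
Hypothesis tmin : forall y, ge I S t y -> y = t.
Variable c : Ob I.
Variable f : Hom c (pob I S a).
Variable g : Hom c (pob I S t).
Hypothesis H : forall h : ge I S a t, ccomp (pmo I S a t h) f = g.

Definition RR (x : car I S) : Prop := ge I S a x \/ x = t.

Lemma ER : forall x, RR x -> ~ ge I S a x -> x = t.
Proof. intros x [h|h] n; [contradiction|exact h]. Qed.

Definition bff (x : car I S) (hx : RR x) : Hom c (pob I S x) :=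
  match excluded_middle_informative (ge I S a x) with
  | left h => ccomp (pmo I S a x h) f
  | right nh => eq_rect t (fun y => Hom c (pob I S y)) g x (eq_sym (ER x hx nh))
  end.

Lemma bff_eq : forall x hx h, bff x hx = ccomp (pmo I S a x h) f.
Proof.
  intros. unfold bff. destruct (excluded_middle_informative _) as [h'|n].
  - rewrite (proof_irrelevance _ h' h). reflexivity.
  - contradiction.
Qed.

Lemma bff_t : forall ht, bff t ht = g.
Proof.
  intros. unfold bff. destruct (excluded_middle_informative _) as [h'|n].
  - apply H.
  - rewrite (proof_irrelevance _ (eq_sym (ER t ht n)) eq_refl). reflexivity.
Qed.

Lemma RR_fin : exists l, forall x, RR x -> In x l.
Proof.
  destruct (down_fin m a) as [l Hl]. exists (t :: l).
  intros x [h|h]; simpl; [right; auto|left; auto].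
Qed.

Lemma RR_sec : forall x y, RR x -> ge I S x y -> RR y.
Proof.
  intros x y [h|h] hxy.
  - left. eapply ge_trans; eauto.
  - subst. right. apply tmin. auto.
Qed.

Lemma bff_cone : forall x y (hx : RR x) (hy : RR y) (h : ge I S x y),
  ccomp (pmo I S x y h) (bff x hx) = bff y hy.
Proof.
  intros x y hx hy h.
  destruct (classic (ge I S a x)) as [ha|na].
  - assert (hb : ge I S a y) by (eapply ge_trans; eauto).
    rewrite (bff_eq x hx ha), (bff_eq y hy hb), ccomp_assoc.
    rewrite (pmo_comp m a x y ha h hb). reflexivity.
  - pose proof (ER x hx na). subst x. pose proof (tmin y h). subst y.
    rewrite pmo_refl, ccomp_id_l. f_equal. apply proof_irrelevance.
Qed.

Definition newBel : Bel I S :=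
  {| bR := RR; bfin := RR_fin; bsec := RR_sec; bv := c; bf := bff; bcone := bff_cone |}.

End Build.

Variable i : Ob I.

Definition z0 : Bel I (stage I 0) :=
  {| bR := fun _ => False; bfin := ex_intro _ nil (fun x (h : False) => False_ind _ h);
     bsec := fun x y (h : False) _ => h; bv := i;
     bf := fun c (h : False) => False_rect _ h;
     bcone := fun c d (hc : False) _ _ => False_ind _ hc |}.

Fixpoint rep (k : nat) : car I (stage I (S k)) :=
  match k as k0 return car I (stage I (S k0)) with
  | O => inr z0
  | S k' => inl (rep k')
  end.

Lemma rep_min : forall k y, ge I (stage I (S k)) (rep k) y -> y = rep k.
Proof.
  induction k.
  - intros [y|y]; simpl; [destruct y|]. intros; subst; reflexivity.
  - intros [y|y]; simpl; [|tauto]. intros h. f_equal. apply IHk. exact h.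
Qed.

Lemma rep_emb : forall k, emb I (S k) (rep k) = existT _ 0 z0.
Proof. induction k; [reflexivity|]. simpl. exact IHk. Qed.

Lemma rep_pob : forall k, pob I (stage I (S k)) (rep k) = i.
Proof. induction k; [reflexivity|]. simpl. exact IHk. Qed.

Definition Zob : over_ob I i := existT _ (existT _ 0 z0) (cid i).

Lemma pI_mor_transp : forall x y y' (E : y = y') (h : AMor I x y),
  pI_mor I x y' (eq_rect y (AMor I x) h y' E) = castHom (f_equal (pI I) E) (pI_mor I x y h).
Proof. intros. destruct E. reflexivity. Qed.

Lemma main_step (n : nat) (b : Bel I (stage I n)) (u : Hom (bv I _ b) i)
  (c : Ob I) (f : Hom c (bv I _ b))
  (H : forall h : ge I (stage I (S n)) (inr b) (rep n),
       ccomp (pmo I (stage I (S n)) (inr b) (rep n) h) f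
       = ccomp (castHom (eq_sym (rep_pob n)) u) f) :
  clos_refl_sym_trans (over_ob I i) (over_mor I i) (existT _ (existT _ n b) u) Zob.
Proof.
  set (g := castHom (eq_sym (rep_pob n)) (ccomp u f)).
  assert (H' : forall h : ge I (stage I (S n)) (inr b) (rep n),
       ccomp (pmo I (stage I (S n)) (inr b) (rep n) h) f = g).
  { intros h. rewrite H. unfold g. rewrite castHom_comp. reflexivity. }
  set (e := newBel (S n) (inr b) (rep n) (rep_min n) c f g).
  set (eo := existT (fun a => Hom (pI I a) i) (existT _ (S n) e) (ccomp u f) : over_ob I i).
  apply rst_trans with eo.
  - apply rst_sym. apply rst_step.
    assert (ha : RR (S n) (inr b) (rep n) (inr b)) by (left; apply ge_refl).
    exists (AMor_step I (S n) e (inr b) ha). simpl.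
    change (ccomp u (bff (S n) (inr b) (rep n) c f g (inr b) ha) = ccomp u f).
    rewrite (bff_eq _ _ _ _ _ _ _ _ (ge_refl (S n) (inr b))), pmo_refl, ccomp_id_l.
    reflexivity.
  - apply rst_step.
    assert (ht : RR (S n) (inr b) (rep n) (rep n)) by (right; reflexivity).
    exists (eq_rect _ (AMor I (existT _ (S n) e)) (AMor_step I (S n) e (rep n) ht) _ (rep_emb n)).
    simpl. rewrite pI_mor_transp. simpl.
    change (ccomp (cid i) (castHom (f_equal (pI I) (rep_emb n))
       (castHom (eq_sym (pI_emb I (S n) (rep n))) (bff (S n) (inr b) (rep n) c f g (rep n) ht)))
       = ccomp u f).
    rewrite (bff_t _ _ _ _ _ _ H'). unfold g.
    rewrite !castHom_trans, castHom_loop, ccomp_id_l. reflexivity.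
Qed.

Lemma connect_Z (x : over_ob I i) :
  directed I -> clos_refl_sym_trans (over_ob I i) (over_mor I i) x Zob.
Proof.
  intros [_ [_ Heq]].
  destruct x as [[n b] u]. simpl in u.
  destruct (classic (ge I (stage I (S n)) (inr b) (rep n))) as [h|nh].
  - destruct (Heq _ _ (pmo I (stage I (S n)) (inr b) (rep n) h)
                (castHom (eq_sym (rep_pob n)) u)) as [c [f Hf]].
    apply (main_step n b u c f).
    intros h'. rewrite (proof_irrelevance _ h' h). exact Hf.
  - apply (main_step n b u (bv I _ b) (cid _)). intros h; contradiction.
Qed.

End Proofs.

Theorem lemma3p10 (I : Cat) (HI : directed I) : pI_cofinal I.
Proof.
  intros i. split.
  - constructor. exact (Zob I i).
  - intros x y. apply rst_trans with (Zob I i).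
    + apply connect_Z; auto.
    + apply rst_sym. apply connect_Z; auto.
Qed.
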